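(* Fix $\lambda\vdash d$ and $x\in\mathbb{O}_\lambda\subset\mathcal{N}_d$. Consider the Braverman--Gaitsgory Weyl group actions on the zero weight spaces $H_{2d_\lambda}(\tilde{\mathfrak{g}}^x_{1^d})$ and $H^{2d_\lambda}(\tilde{\mathfrak{g}}^x_{1^d})$, in which $s_a$ acts by $T_a=\exp(E_a)\exp(-F_a)\exp(E_a)$. These actions equal the Springer actions tensored with the sign representation of $S_d$.
   Context: Take $n=d$, $G=\mathrm{GL}_d$, $\mathfrak{g}_d=\mathfrak{gl}_d$, $\mathcal{N}_d$ the nilpotent cone, and $\mathbb{O}_\lambda$ the nilpotent orbit of Jordan type $\lambda$. Let $\mathcal{P}_{d,d}$ be the compositions $\underline{d}=(d_1,\dots,d_d)$ of $d$, let $1^d=(1,\dots,1)$, and let $S_{\underline{d}}\subseteq S_d$ be the block subgroup. Let $\mathcal{F}_{\underline{d}}$ be the variety of flags $0=F_0\subseteq\dots\subseteq F_d=\mathbb{C}^d$ with $\dim F_i/F_{i-1}=d_i$. Set $\tilde{\mathfrak{g}}^x_{\underline{d}}=\{F_\bullet\in\mathcal{F}_{\underline{d}}: xF_i\subseteq F_i\ \forall i\}$ (reduced structure), so $\tilde{\mathfrak{g}}^x_{1^d}$ is the Springer fiber of $x$. Let $d_\lambda=\dim\mathcal{F}_{1^d}-\frac12\dim\mathbb{O}_\lambda$. Homology is Borel--Moore with complex coefficients. The Springer action of $S_d$ on $H_\bullet(\mathcal{F}_{1^d})$ is normalized so that $H_0$ is trivial. It preserves the image of the injection $H_{2d_\lambda}(\tilde{\mathfrak{g}}^x_{1^d})\hookrightarrow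 H_\bullet(\mathcal{F}_{1^d})$, which gives the Springer action on $V:=H_{2d_\lambda}(\tilde{\mathfrak{g}}^x_{1^d})$. On $H^{2d_\lambda}(\tilde{\mathfrak{g}}^x_{1^d})=V^*$ one takes the dual action. The Braverman--Gaitsgory action is defined via the isomorphism of perverse sheaves $(\mathbf{Gro}\otimes\mathbb{E}^{\otimes d})^{S_d}\cong(p_{d,d})_*\mathcal{K}$, taking $!$-stalks for homology and $*$-stalks for cohomology. On $\bigoplus_{\underline{d}}H_{2d_\lambda}(\tilde{\mathfrak{g}}^x_{\underline{d}})$ it is described as follows. - Proper pushforward along $\tilde{\mathfrak{g}}^x_{1^d}\to\tilde{\mathfrak{g}}^x_{\underline{d}}$ gives isomorphisms $V^{S_{\underline{d}}}\cong H_{2d_\lambda}(\tilde{\mathfrak{g}}^x_{\underline{d}})$. - With $\mathbb{E}=\mathbb{C}^d$ (basis $\theta_i$) and $\theta_{\underline{d}}=\theta_1^{\otimes d_1}\otimes\cdots\otimes\theta_d^{\otimes d_d}$, the map $v\mapsto\frac{1}{\#S_d}\sum_{y\in S_d}y(v)\otimes y(\theta_{\underline{d}})$ identifies $\bigoplus_{\underline{d}}V^{S_{\underline{d}}}$ with $(V\otimes\mathbb{E}^{\otimes d})^{S_d}$. - The $\mathrm{GL}(\mathbb{E})$-action on the latter, with Chevalley generators $E_a\theta_{a+1}=\theta_a$ and $F_a\theta_a=\theta_{a+1}$ (killing other basis vectors), is transported back. The cohomological action on $\bigoplus_{\underline{d}}H^{2d_\lambda}(\tilde{\mathfrak{g}}^x_{\underline{d}})$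 is the same construction applied to $V^*$. Here $(V^* )^{S_{\underline{d}}}$ is identified with $(V^{S_{\underline{d}}})^*$ by restriction. In both cases the $\underline{d}=1^d$ summand is the zero weight space for $\mathfrak{sl}_d$, and the operators $T_a$ ($a\in[d-1]$) define an $S_d$-action on it. *)

(* Defs.v *)
(* Algebraic model of the Braverman--Gaitsgory construction
   on the zero weight space, for an S_d-representation V. *)
From HB Require Import structures.
From mathcomp Require Import all_boot all_order all_algebra all_fingroup.
Set Implicit Arguments. Unset Strict Implicit. Unset Printing Implicit Defensive.
Import GRing.Theory.
Local Open Scope ring_scope.

Section BG.
Variables (C : fieldType) (V : lmodType C) (d : nat).

(* Index tuples (i_1,...,i_d) of basis tensors theta_{i_1} (x) ... (x) theta_{i_d}
   of E^{(x) d}, E = C^d (indices 0-based). *)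
Definition idx := {ffun 'I_d -> 'I_d}.

(* V (x) E^{(x) d}, an element being  sum_i f(i) (x) theta_i. *)
Definition tens := {ffun idx -> V}.

Definition setpos (j : idx) (k c : 'I_d) : idx :=
  [ffun l => if l == k then c else j l].

(* Diagonal S_d action: y (v (x) theta_i) = (rho y v) (x) theta_{i o y^-1}
   (tensor factor in position k moved to position y k). *)
Definition tensS (rho : 'S_d -> V -> V) (y : 'S_d) (f : tens) : tens :=
  [ffun j : idx => rho y (f [ffun k => j (y k)])].

(* Chevalley generators (acting on E^{(x)d} as derivations, on V trivially):
   E_a theta_{a+1} = theta_a, F_a theta_a = theta_{a+1}; here b = a+1. *)
Definition chevE (a b : 'I_d) (f : tens) : tens :=
  [ffun j : idx => \sum_(k < d | j k == a) f (setpos j k b)].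
Definition chevF (a b : 'I_d) (f : tens) : tens :=
  [ffun j : idx => \sum_(k < d | j k == b) f (setpos j k a)].

(* Exponential of an operator which is nilpotent of order <= d+1
   (true for +-E_a, +-F_a on E^{(x) d}), as the finite exponential series. *)
Definition exp_nil (X : tens -> tens) (f : tens) : tens :=
  \sum_(m < d.+1) ((m`!)%:R)^-1 *: iter m X f.

Definition Top (a b : 'I_d) (f : tens) : tens :=
  exp_nil (chevE a b) (exp_nil (fun g => - chevF a b g) (exp_nil (chevE a b) f)).

Definition base_tensor (v : V) : tens :=
  [ffun j : idx => if j == [ffun k => k] then v else 0].

(* The identification V = V^{S_{1^d}} -> (V (x) E^{(x) d})^{S_d},
   v |-> 1/#S_d  sum_y y(v) (x) y(theta_{1^d}). *)
Definition iotaBG (rho : 'S_d -> V -> V) (v : V) : tens :=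
  (#|'S_d|%:R)^-1 *: \sum_(y : 'S_d) tensS rho y (base_tensor v).

End BG.

(* Main.v *)
Require Import Defs.
From HB Require Import structures.
From mathcomp Require Import all_boot all_order all_algebra all_fingroup.
Import GRing.Theory.
Local Open Scope ring_scope.
Set Implicit Arguments. Unset Strict Implicit.

Section Aux.
Variables (C : fieldType) (V : lmodType C) (d : nat).
Local Notation tens := (tens V d).
Local Notation idx := (idx d).

Definition dlt (j : idx) (w : V) : tens := [ffun j' => if j' == j then w else 0].

Lemma setpos_at (j : idx) k c : setpos j k c k = c.
Proof. by rewrite ffunE eqxx. Qed.
Lemma setposK (j : idx) k c c' : setpos (setpos j k c) k c' = setpos j k c'.
Proof. by apply/ffunP=> l; rewrite !ffunE; case: eqP. Qed.
Lemma setpos_id (j : idx) k c : j k = c -> setpos j k c = j.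
Proof. by move=> h; apply/ffunP=> l; rewrite !ffunE; case: eqP => // ->. Qed.

Lemma chevE_dlt a b (j : idx) w :
  chevE a b (dlt j w) = \sum_(k < d | j k == b) dlt (setpos j k a) w.
Proof.
apply/ffunP=> j'; rewrite sum_ffunE !ffunE big_mkcond [RHS]big_mkcond /=.
apply: eq_bigr=> k _; rewrite !ffunE.
have -> : forall (x y : bool), (if x then (if y then w else 0) else 0) = if x && y then w else 0.
  by case; case.
have -> : forall (x y : bool), (if x then (if y then w else 0) else 0) = if x && y then w else 0.
  by case; case.
have -> // : (j' k == a) && (setpos j' k b == j) = (j k == b) && (j' == setpos j k a).
apply/idP/idP.
- move/andP=> [/eqP ha /eqP hs]; subst j.
  by rewrite setpos_at eqxx /= setposK setpos_id.
- move/andP=> [/eqP hb /eqP hs]; subst j'.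
  by rewrite setpos_at eqxx /= setposK setpos_id.
Qed.

Definition lin (X : tens -> tens) := forall c f g, X (c *: f + g) = c *: X f + X g.

Lemma lin0 X : lin X -> X 0 = 0.
Proof.
move=> h; have h1 := h 1 0 0; rewrite !scale1r addr0 in h1.
by apply: (addIr (X 0)); rewrite add0r -h1.
Qed.
Lemma linD X : lin X -> forall f g, X (f + g) = X f + X g.
Proof. by move=> h f g; have := h 1 f g; rewrite !scale1r. Qed.
Lemma linZ X : lin X -> forall c f, X (c *: f) = c *: X f.
Proof. by move=> h c f; rewrite -[c *: f]addr0 h lin0 // addr0. Qed.
Lemma linN X : lin X -> forall f, X (- f) = - X f.
Proof. by move=> h f; rewrite -scaleN1r linZ // scaleN1r. Qed.
Lemma linB X : lin X -> forall f g, X (f - g) = X f - X g.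
Proof. by move=> h f g; rewrite linD // linN. Qed.
Lemma lin_sum X I (r : seq I) (P : pred I) F : lin X ->
  X (\sum_(i <- r | P i) F i) = \sum_(i <- r | P i) X (F i).
Proof. by move=> h; elim/big_rec2: _ => [|i y1 y2 _ <-]; rewrite ?lin0 ?linD. Qed.

Lemma lin_comp X Y : lin X -> lin Y -> lin (fun f => X (Y f)).
Proof. by move=> hX hY c f g; rewrite hY hX. Qed.
Lemma lin_opp X : lin X -> lin (fun f => - X f).
Proof. by move=> hX c f g; rewrite hX opprD scalerN. Qed.
Lemma lin_iter X m : lin X -> lin (iter m X).
Proof. by move=> hX; elim: m => [|m IH] c f g //=; rewrite IH hX. Qed.
Lemma lin_exp X : lin X -> lin (exp_nil X).
Proof.
move=> hX c f g; rewrite /exp_nil scaler_sumr -big_split; apply: eq_bigr => m _.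
by rewrite lin_iter // scalerDr !scalerA mulrC.
Qed.
Lemma lin_chevE a b : lin (chevE a b).
Proof.
move=> c f g; apply/ffunP=> j; rewrite !ffunE scaler_sumr -big_split.
by apply: eq_bigr=> k _; rewrite !ffunE.
Qed.
Lemma lin_Top a b : lin (Top a b).
Proof.
rewrite /Top; apply: lin_comp; first exact/lin_exp/lin_chevE.
apply: lin_comp; first exact/lin_exp/lin_opp/lin_chevE.
exact/lin_exp/lin_chevE.
Qed.

Lemma iter0 X m : lin X -> iter m X 0 = 0.
Proof. by move=> h; elim: m => //= m ->; rewrite lin0. Qed.

Lemma exp_small X f : (2 <= d)%N -> lin X -> X (X (X f)) = 0 ->
  exp_nil X f = f + X f + 2%:R^-1 *: X (X f).
Proof.
move=> d2 hX h3; rewrite /exp_nil.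
rewrite -(big_mkord (fun _ => true) (fun m => (m`!%:R)^-1 *: iter m X f)).
rewrite big_ltn // big_ltn ?ltnS ?(ltnW d2) // big_ltn ?ltnS //.
rewrite big_nat_cond big1; last first.
  move=> i /andP[/andP[hi _] _]; rewrite -(subnK hi) iterD /= h3 iter0 // scaler0 //.
by rewrite /= invr1 !scale1r addr0 !addrA.
Qed.

End Aux.

Lemma zid (M : zmodType) (x y z u : M) : x - y + (z - (u + x) + y) = z - u.
Proof.
by rewrite (addrC (z - (u+x)) y) addrA subrK opprD addrCA (addrC (-u)) addNKr.
Qed.

Section T.
Variables (C : fieldType) (V : lmodType C) (d : nat).
Local Notation tens := (tens V d).
Local Notation idx := (idx d).
Variables (a b : 'I_d) (hab : a != b) (d2 : (2 <= d)%N) (two : (2%:R : C) != 0).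

Lemma sum1 (j : idx) c k0 (F : 'I_d -> tens) : (forall k, (j k == c) = (k == k0)) ->
  \sum_(k < d | j k == c) F k = F k0.
Proof. by move=> h; rewrite (eq_bigl (fun k => k == k0)) ?big_pred1_eq. Qed.
Lemma sum0 (j : idx) c (F : 'I_d -> tens) : (forall k, j k != c) ->
  \sum_(k < d | j k == c) F k = 0.
Proof. by move=> h; rewrite big_pred0 // => k; exact/negbTE. Qed.
Lemma sum2 (j : idx) c k1 k2 (F : 'I_d -> tens) : k1 != k2 ->
  (forall k, (j k == c) = (k == k1) || (k == k2)) ->
  \sum_(k < d | j k == c) F k = F k1 + F k2.
Proof.
move=> hk h; rewrite (bigD1 k1) ?h ?eqxx //=; congr (_ + _).
rewrite (eq_bigl (fun k => k == k2)) ?big_pred1_eq // => k; rewrite h; case: (k =P k1) => [->|] /=; last by rewrite andbT.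
by rewrite (negbTE hk).
Qed.

Lemma chevFE : chevF (V:=V) a b = chevE b a. Proof. by []. Qed.

Lemma Top_dlt (j : idx) p q (w : V) : j p = a -> j q = b ->
  (forall k, j k = a -> k = p) -> (forall k, j k = b -> k = q) ->
  Top a b (dlt j w) = dlt (setpos (setpos j q a) p b) (- w).
Proof.
move=> jp jq hp hq.
have pq : p != q by apply/eqP=> e; move: hab; rewrite -jp -jq e eqxx.
have qp : q != p by rewrite eq_sym.
have ba : b != a by rewrite eq_sym.
have Hjb k : (j k == b) = (k == q) by apply/eqP/eqP => [/hq|->].
have Hja k : (j k == a) = (k == p) by apply/eqP/eqP => [/hp|->].
set jaa := setpos j q a; set jbb := setpos j p b; set j' := setpos jaa p b.
have Hjaa_b k : jaa k != b.
  by rewrite ffunE; case: (k =P q) => [_|/eqP kq]; rewrite ?Hjb. 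
have Hjaa_a k : (jaa k == a) = (k == p) || (k == q).
  by rewrite ffunE; case: (k =P q) => [e|_]; rewrite ?e; rewrite ?eqxx ?orbT // Hja orbF.
have Hjbb_a k : jbb k != a.
  by rewrite ffunE; case: (k =P p) => [_|/eqP kp]; rewrite ?Hja.
have Hj'_b k : (j' k == b) = (k == p).
  rewrite ffunE; case: (k =P p) => [e|_]; rewrite ?e; rewrite ?eqxx //.
  by apply/negbTE.
have Hj'_a k : (j' k == a) = (k == q).
  rewrite !ffunE; case: (k =P p) => [e|/eqP kp]; first by rewrite e (negbTE ba) (negbTE pq).
  by case: (k =P q) => [e|_]; rewrite ?eqxx // Hja (negbTE kp).
have e1 : setpos jaa q b = j by rewrite setposK setpos_id.
have e2 : setpos j' p a = jaa by rewrite setposK setpos_id // ffunE (negbTE pq).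
have e3 : setpos j' q b = jbb.
  apply/ffunP=> k; rewrite !ffunE; have [->|kq] := eqVneq k q; first by rewrite ?eqxx ?(negbTE qp) ?jq.
  by have [e|kp] := eqVneq k p.
have E1 (u : V) : chevE a b (dlt j u) = dlt jaa u by rewrite chevE_dlt (sum1 _ Hjb).
have E2 (u : V) : chevE a b (dlt jaa u) = 0 by rewrite chevE_dlt (sum0 _ Hjaa_b).
have E3 (u : V) : chevE a b (dlt j' u) = dlt jaa u by rewrite chevE_dlt (sum1 _ Hj'_b) e2.
have F1 (u : V) : chevE b a (dlt j u) = dlt jbb u by rewrite chevE_dlt (sum1 _ Hja).
have F2 (u : V) : chevE b a (dlt jbb u) = 0 by rewrite chevE_dlt (sum0 _ Hjbb_a).
have F3 (u : V) : chevE b a (dlt jaa u) = dlt j' u + dlt j u.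
  by rewrite chevE_dlt (sum2 _ pq Hjaa_a) e1.
have F4 (u : V) : chevE b a (dlt j' u) = dlt jbb u by rewrite chevE_dlt (sum1 _ Hj'_a) e3.
have LE : lin (chevE (V:=V) a b) := lin_chevE a b.
have LFb : lin (chevE (V:=V) b a) := lin_chevE b a.
have LF : lin (fun g => - chevE (V:=V) b a g) := lin_opp (lin_chevE b a).
rewrite /Top chevFE.
rewrite (@exp_small C V d _ (dlt j w) d2 LE); last by rewrite E1 E2 lin0.
rewrite E1 E2 scaler0 addr0 (linD (lin_exp LF)).
rewrite (@exp_small C V d _ (dlt j w) d2 LF); last by rewrite /= F1 !(linN LFb) F2 ?oppr0 ?opprK ?(lin0 LFb) ?oppr0 ?opprK ?(lin0 LFb) ?oppr0.
rewrite (@exp_small C V d _ (dlt jaa w) d2 LF); last first.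
  by rewrite /= F3 !(linN LFb) ?opprK (linD LFb) F4 F1 (linD LFb) !F2 addr0 ?oppr0.
rewrite /= F1 (linN LFb) opprK F2 scaler0 addr0 F3 (linN LFb) opprK (linD LFb) F4 F1.
have -> : 2%:R^-1 *: (dlt jbb w + dlt jbb w) = dlt jbb w.
  by rewrite -mulr2n -scaler_nat scalerA mulVf // scale1r.
rewrite zid (exp_small d2 LE); last by rewrite (linB LE) E2 E3 sub0r (linN LE) E2 oppr0 (lin0 LE).
rewrite (linB LE) E2 E3 sub0r (linN LE) E2 oppr0 scaler0 addr0 addrAC subrr add0r.
by apply/ffunP=> k; rewrite !ffunE; case: (k == j'); rewrite ?oppr0.
Qed.
End T.

Theorem mainTheorem6 (C : numClosedFieldType) (V : lmodType C) (d : nat)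
  (rho : 'S_d -> {linear V -> V})
  (rho1 : forall v : V, rho 1%g v = v)
  (rhoM : forall (y z : 'S_d) (v : V), rho (y * z)%g v = rho z (rho y v))
  (a b : 'I_d) (hab : nat_of_ord b = (nat_of_ord a).+1) (v : V) :
  Top a b (iotaBG (fun y => (rho y : V -> V)) v)
  = iotaBG (fun y => (rho y : V -> V)) (- rho (tperm a b) v).
Proof.
have ab : a != b.
  by apply/eqP => e; move: hab; rewrite e => h; exact: (n_Sn _ h).
have d2 : (2 <= d)%N by have := ltn_ord b; rewrite hab => H; apply: leq_trans H.
have two : (2%:R : C) != 0 by rewrite Num.Theory.pnatr_eq0.
set s := tperm a b.
have tens_dlt (y : 'S_d) (u : V) : tensS (fun y => (rho y : V -> V)) y (base_tensor d u)
    = dlt [ffun k => (y^-1)%g k] (rho y u).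
  apply/ffunP => j; rewrite !ffunE.
  have -> : ([ffun k => j (y k)] == [ffun k => k]) = (j == [ffun k => (y^-1)%g k]).
    apply/eqP/eqP => [h|->].
    - apply/ffunP => k; rewrite ffunE.
      by have := congr1 (fun f : idx d => f ((y^-1)%g k)) h; rewrite !ffunE permKV.
    - by apply/ffunP => k; rewrite !ffunE permK.
  by case: eqP => _; rewrite ?raddf0.
rewrite /iotaBG (linZ (lin_Top a b)) (lin_sum _ _ _ (lin_Top a b)).
congr (_ *: _).
rewrite (eq_bigr (fun y : 'S_d => dlt [ffun k => s ((y^-1)%g k)] (- rho y v))); last first.
  move=> y _; rewrite tens_dlt.
  have jp : [ffun k => (y^-1)%g k] (y a) = a by rewrite ffunE permK.
  have jq : [ffun k => (y^-1)%g k] (y b) = b by rewrite ffunE permK.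
  have hp k : [ffun k => (y^-1)%g k] k = a -> k = y a by rewrite ffunE => <-; rewrite permKV.
  have hq k : [ffun k => (y^-1)%g k] k = b -> k = y b by rewrite ffunE => <-; rewrite permKV.
  rewrite (Top_dlt ab d2 two _ jp jq hp hq); congr dlt.
  apply/ffunP => k; rewrite !ffunE.
  have [->|ka] := eqVneq k (y a); first by rewrite permK tpermL.
  have [->|kb] := eqVneq k (y b); first by rewrite permK tpermR.
  rewrite tpermD //.
  - by apply: contra ka => /eqP ->; rewrite permKV.
  - by apply: contra kb => /eqP ->; rewrite permKV.
rewrite (reindex_inj (mulgI s)) /=; apply: eq_bigr => z _.
rewrite tens_dlt; congr dlt.
- by apply/ffunP => k; rewrite !ffunE invMg permM permKV.
- by rewrite rhoM raddfN.
Qed.
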